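(* There is a universal constant $c$ such that for every sufficiently large integer $N$ there is a covering of $\mathbb{S}^2$ by $N$ strips of Euclidean half-width $\frac{10\ln N}{N}$ in which no point of $\mathbb{S}^2$ is covered more than $c\ln N$ times.
   Context: $\mathbb{S}^2=\{x\in\mathbb{R}^3:|x|=1\}$. For $x\in\mathbb{S}^2$ and $0\le w\le 1$, the strip centered at $x$ of Euclidean half-width $w$ is $\{v\in\mathbb{S}^2:|\langle v,x\rangle|\le w\}$. *)

(* Defs.v *)
From Stdlib Require Import Reals List.
Open Scope R_scope.

Definition pt3 : Type := (R * R * R)%type.

Definition dot3 (u v : pt3) : R :=
  let '(u1, u2, u3) := u in let '(v1, v2, v3) := v in
  u1 * v1 + u2 * v2 + u3 * v3.

Definition on_sphere (x : pt3) : Prop := dot3 x x = 1.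

Definition in_strip (x : pt3) (w : R) (v : pt3) : Prop :=
  on_sphere v /\ Rabs (dot3 v x) <= w.

Definition cover_count (centers : nat -> pt3) (N : nat) (w : R) (v : pt3) : nat :=
  length (filter (fun i => if Rle_dec (Rabs (dot3 v (centers i))) w then true else false)
                 (seq 0 N)).

(* Main.v *)
Require Import Defs.
From Stdlib Require Import Reals List Lra Lia ZArith.
Open Scope R_scope.

Fixpoint sumR {A} (f : A -> R) (l : list A) : R :=
  match l with nil => 0 | a :: l' => f a + sumR f l' end.
Fixpoint prodR {A} (f : A -> R) (l : list A) : R :=
  match l with nil => 1 | a :: l' => f a * prodR f l' end.

Lemma sumR_app {A} (f : A -> R) l1 l2 : sumR f (l1 ++ l2) = sumR f l1 + sumR f l2.
Proof. induction l1; simpl; [ring| rewrite IHl1; ring]. Qed.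
Lemma sumR_map {A B} (f : B -> R) (g : A -> B) l : sumR f (map g l) = sumR (fun a => f (g a)) l.
Proof. induction l; simpl; [ring| rewrite IHl; ring]. Qed.
Lemma sumR_flat_map {A B} (f : B -> R) (g : A -> list B) l :
  sumR f (flat_map g l) = sumR (fun a => sumR f (g a)) l.
Proof. induction l; simpl; [ring| rewrite sumR_app, IHl; ring]. Qed.
Lemma sumR_plus {A} (f g : A -> R) l : sumR (fun a => f a + g a) l = sumR f l + sumR g l.
Proof. induction l; simpl; [ring| rewrite IHl; ring]. Qed.
Lemma sumR_scal {A} (c : R) (f : A -> R) l : sumR (fun a => c * f a) l = c * sumR f l.
Proof. induction l; simpl; [ring| rewrite IHl; ring]. Qed.
Lemma sumR_div {A} (c : R) (f : A -> R) l : sumR (fun a => f a / c) l = sumR f l / c.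
Proof. induction l; simpl; unfold Rdiv; [ring| unfold Rdiv in IHl; rewrite IHl; ring]. Qed.
Lemma sumR_ext_in {A} (f g : A -> R) l : (forall a, In a l -> f a = g a) -> sumR f l = sumR g l.
Proof. induction l; simpl; intros H; [auto| rewrite H, IHl; auto]. Qed.
Lemma sumR_le_in {A} (f g : A -> R) l : (forall a, In a l -> f a <= g a) -> sumR f l <= sumR g l.
Proof. induction l; simpl; intros H; [lra| ]. pose proof (H a (or_introl eq_refl)).
  pose proof (IHl (fun x Hx => H x (or_intror Hx))). lra. Qed.
Lemma sumR_nonneg {A} (f : A -> R) l : (forall a, In a l -> 0 <= f a) -> 0 <= sumR f l.
Proof. intros H. replace 0 with (sumR (fun _ : A => 0) l).
  - apply sumR_le_in; auto.
  - induction l; simpl; [auto| rewrite IHl; [ring| intros; apply H; simpl; auto]].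
Qed.
Lemma sumR_const {A} (c : R) (l : list A) : sumR (fun _ => c) l = c * INR (length l).
Proof. induction l; simpl length; [simpl; ring| rewrite S_INR; simpl; rewrite IHl; ring]. Qed.
Lemma sumR_swap {A B} (f : A -> B -> R) l1 l2 :
  sumR (fun a => sumR (fun b => f a b) l2) l1 = sumR (fun b => sumR (fun a => f a b) l1) l2.
Proof.
  induction l1; simpl.
  - induction l2; simpl; [ring| rewrite <- IHl2; ring].
  - rewrite IHl1. rewrite <- sumR_plus. reflexivity.
Qed.
Lemma sumR_le_bound {A} (f : A -> R) l c : (forall a, In a l -> f a <= c) -> sumR f l <= c * INR (length l).
Proof. intros H; rewrite <- sumR_const; apply sumR_le_in; auto. Qed.
Lemma sumR_ge_bound {A} (f : A -> R) l c : (forall a, In a l -> c <= f a) -> c * INR (length l) <= sumR f l.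
Proof. intros H; rewrite <- sumR_const; apply sumR_le_in; auto. Qed.

Fixpoint allseq {A} (n : nat) (G : list A) : list (list A) :=
  match n with
  | O => nil :: nil
  | S n' => flat_map (fun a => map (cons a) (allseq n' G)) G
  end.

Lemma allseq_sum {A} (g : A -> R) n G :
  sumR (prodR g) (allseq n G) = (sumR g G) ^ n.
Proof.
  induction n; simpl.
  - ring.
  - rewrite sumR_flat_map.
    rewrite (Rmult_comm (sumR g G)), <- sumR_scal.
    apply sumR_ext_in; intros a _. rewrite sumR_map. simpl.
    rewrite sumR_scal, IHn. ring.
Qed.

Lemma allseq_in {A} n (G : list A) L : In L (allseq n G) -> length L = n /\ (forall a, In a L -> In a G).
Proof.
  revert L; induction n; simpl; intros L HL.
  - destruct HL as [<-|[]]; simpl; split; auto; intros a [].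
  - apply in_flat_map in HL as [a [Ha HL]]. apply in_map_iff in HL as [L' [<- HL']].
    destruct (IHn L' HL') as [H1 H2]. simpl; split; [lia|]. intros b [<-|Hb]; auto.
Qed.

Lemma allseq_length {A} n (G : list A) : INR (length (allseq n G)) = INR (length G) ^ n.
Proof.
  rewrite <- (Rmult_1_l (INR (length (allseq n G)))), <- sumR_const.
  rewrite <- (Rmult_1_l (INR (length G))), <- sumR_const.
  rewrite <- allseq_sum. apply sumR_ext_in. intros L _.
  induction L; simpl; [ring| rewrite <- IHL; ring].
Qed.

Lemma sumR_lt_exists {A} (f : A -> R) l : sumR f l < INR (length l) -> exists a, In a l /\ f a < 1.
Proof.
  induction l; intros H. simpl in H; lra.
  change (length (a::l)) with (S (length l)) in H; rewrite S_INR in H; simpl sumR in H. destruct (Rlt_dec (f a) 1).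
  - exists a; split; [left; auto| lra].
  - destruct IHl as [b [Hb Hf]]. lra. exists b; split; [right; auto| auto].
Qed.

Definition indI (A B x : R) : R := if Rle_dec A x then if Rle_dec x B then 1 else 0 else 0.
Definition cntI (M : nat) (A B : R) : R := sumR (fun k => indI A B (INR k)) (seq 0 M).

Lemma indI_01 A B x : 0 <= indI A B x <= 1.
Proof. unfold indI; destruct Rle_dec; [destruct Rle_dec|]; lra. Qed.

Lemma cntI_nonneg M A B : 0 <= cntI M A B.
Proof. apply sumR_nonneg; intros; apply indI_01. Qed.

Lemma cntI_S M A B : cntI (S M) A B = cntI M A B + indI A B (INR M).
Proof. unfold cntI; rewrite seq_S, sumR_app; simpl; ring. Qed.

Lemma in_seq0 k M : In k (seq 0 M) -> INR k + 1 <= INR M.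
Proof. intros H; apply in_seq in H. rewrite <- S_INR; apply le_INR; lia. Qed.

Lemma cntI_ub M : forall A B, cntI M A B <= Rmax 0 (B - A + 1).
Proof.
  induction M; intros A B.
  - unfold cntI; simpl. apply Rmax_l.
  - rewrite cntI_S. unfold indI. destruct (Rle_dec A (INR M)); [destruct (Rle_dec (INR M) B)|].
    + assert (E : cntI M A B = cntI M A (INR M - 1)).
      { unfold cntI; apply sumR_ext_in; intros k Hk; apply in_seq0 in Hk.
        unfold indI; destruct (Rle_dec A (INR k)); auto.
        destruct (Rle_dec (INR k) B); destruct (Rle_dec (INR k) (INR M - 1)); lra. }
      rewrite E. specialize (IHM A (INR M - 1)).
      rewrite Rmax_right in IHM by lra. rewrite Rmax_right by lra. lra.
    + specialize (IHM A B); lra.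
    + specialize (IHM A B); lra.
Qed.

Lemma cntI_lb M : forall A B, -1 <= A -> B <= INR M -> B - A - 1 <= cntI M A B.
Proof.
  induction M; intros A B HA HB.
  - simpl in HB; unfold cntI; simpl; lra.
  - rewrite cntI_S. rewrite S_INR in HB.
    pose proof (indI_01 A B (INR M)).
    destruct (Rle_dec B (INR M)).
    + specialize (IHM A B HA r); lra.
    + destruct (Rle_dec A (INR M)).
      * assert (E : cntI M A (INR M) <= cntI M A B).
        { unfold cntI; apply sumR_le_in; intros k Hk; apply in_seq0 in Hk.
          unfold indI; destruct (Rle_dec A (INR k)); [|lra].
          destruct (Rle_dec (INR k) B); destruct (Rle_dec (INR k) (INR M)); lra. }
        specialize (IHM A (INR M) HA (Rle_refl _)).
        unfold indI; destruct (Rle_dec A (INR M)); [|lra]. destruct (Rle_dec (INR M) B); lra.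
      * pose proof (cntI_nonneg M A B); lra.
Qed.

Definition gridc (M : nat) (k : nat) : R := (2 * INR k + 1 - INR M) / INR M.
Definition Ind (x h : R) : R := if Rle_dec (Rabs x) h then 1 else 0.

Lemma Ind_01 x h : 0 <= Ind x h <= 1.
Proof. unfold Ind; destruct Rle_dec; lra. Qed.

Lemma gridc_bound M k : (k < M)%nat -> -1 <= gridc M k <= 1.
Proof.
  intros H. unfold gridc. assert (HM: 0 < INR M) by (apply lt_0_INR; lia).
  assert (Hk: INR k + 1 <= INR M) by (rewrite <- S_INR; apply le_INR; lia).
  pose proof (pos_INR k).
  split.
  - apply Rmult_le_reg_r with (INR M); auto. unfold Rdiv; rewrite Rmult_assoc, Rinv_l by lra. lra.
  - apply Rmult_le_reg_r with (INR M); auto. unfold Rdiv; rewrite Rmult_assoc, Rinv_l by lra. lra.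
Qed.

Lemma indI_grid M lo hi k : (0 < M)%nat ->
  indI lo hi (gridc M k) = indI ((INR M * lo + INR M - 1)/2) ((INR M * hi + INR M - 1)/2) (INR k).
Proof.
  intros H. assert (HM: 0 < INR M) by (apply lt_0_INR; lia).
  assert (E: gridc M k * INR M = 2 * INR k + 1 - INR M).
  { unfold gridc; field; lra. }
  set (g := gridc M k) in *.
  assert (Hlo: lo <= g <-> (INR M * lo + INR M - 1)/2 <= INR k).
  { split; intros.
    - assert (lo * INR M <= g * INR M) by (apply Rmult_le_compat_r; lra). nra.
    - apply Rmult_le_reg_r with (INR M); auto. nra. }
  assert (Hhi: g <= hi <-> INR k <= (INR M * hi + INR M - 1)/2).
  { split; intros.
    - assert (g * INR M <= hi * INR M) by (apply Rmult_le_compat_r; lra). nra.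
    - apply Rmult_le_reg_r with (INR M); auto. nra. }
  unfold indI.
  destruct (Rle_dec lo g); destruct (Rle_dec _ (INR k)); try tauto;
  try (destruct (Rle_dec g hi); destruct (Rle_dec (INR k) _); tauto).

Qed.

Definition cntG (M : nat) (lo hi : R) : R := sumR (fun k => indI lo hi (gridc M k)) (seq 0 M).

Lemma cntG_ub M lo hi : (0 < M)%nat -> lo <= hi -> cntG M lo hi <= (hi - lo) * INR M / 2 + 1.
Proof.
  intros H Hle. assert (HM: 0 < INR M) by (apply lt_0_INR; lia).
  unfold cntG. rewrite (sumR_ext_in _ (fun k => indI ((INR M * lo + INR M - 1)/2) ((INR M * hi + INR M - 1)/2) (INR k)))
    by (intros; apply indI_grid; auto).
  eapply Rle_trans; [apply cntI_ub|]. apply Rmax_lub.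
  - assert (0 <= (hi - lo) * INR M) by (apply Rmult_le_pos; lra). lra.
  - lra.
Qed.

Lemma cntG_lb M lo hi : (0 < M)%nat -> -1 <= lo -> hi <= 1 -> (hi - lo) * INR M / 2 - 1 <= cntG M lo hi.
Proof.
  intros H Hlo Hhi. assert (HM: 0 < INR M) by (apply lt_0_INR; lia).
  unfold cntG. rewrite (sumR_ext_in _ (fun k => indI ((INR M * lo + INR M - 1)/2) ((INR M * hi + INR M - 1)/2) (INR k)))
    by (intros; apply indI_grid; auto).
  eapply Rle_trans; [|apply cntI_lb].
  - lra.
  - nra.
  - nra.
Qed.

Lemma Rabs_le_inv x b : Rabs x <= b -> - b <= x <= b.
Proof. unfold Rabs; destruct Rcase_abs; lra. Qed.

Lemma div_le_neg a g x : a < 0 -> a * g <= x -> x / a <= g.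
Proof. intros Ha H. assert (Hi: / a < 0) by (apply Rinv_lt_0_compat; lra).
  replace g with (/a * (a * g)) by (field; lra). unfold Rdiv. rewrite Rmult_comm.
  apply Rmult_le_compat_neg_l; lra. Qed.
Lemma le_div_neg a g x : a < 0 -> x <= a * g -> g <= x / a.
Proof. intros Ha H. assert (Hi: / a < 0) by (apply Rinv_lt_0_compat; lra).
  replace g with (/a * (a * g)) by (field; lra). unfold Rdiv. rewrite (Rmult_comm x).
  apply Rmult_le_compat_neg_l; lra. Qed.
Lemma div_le_pos a g x : 0 < a -> x <= a * g -> x / a <= g.
Proof. intros Ha H. assert (Hi: 0 < / a) by (apply Rinv_0_lt_compat; lra).
  replace g with (/a * (a * g)) by (field; lra). unfold Rdiv. rewrite Rmult_comm.
  apply Rmult_le_compat_l; lra. Qed.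
Lemma le_div_pos a g x : 0 < a -> a * g <= x -> g <= x / a.
Proof. intros Ha H. assert (Hi: 0 < / a) by (apply Rinv_0_lt_compat; lra).
  replace g with (/a * (a * g)) by (field; lra). unfold Rdiv. rewrite (Rmult_comm x).
  apply Rmult_le_compat_l; lra. Qed.

Lemma up1 M a c H : (0 < M)%nat -> 0 <= H -> 1/4 <= Rabs a ->
  sumR (fun k => Ind (a * gridc M k + c) H) (seq 0 M) <= 4 * H * INR M + 1.
Proof.
  intros HM0 HH Ha. assert (HM: 0 < INR M) by (apply lt_0_INR; lia).
  destruct (Rle_lt_dec 0 a) as [Hap|Han].
  - rewrite Rabs_right in Ha by lra.
    apply Rle_trans with (cntG M ((-H - c)/a) ((H - c)/a)).
    + unfold cntG; apply sumR_le_in; intros k _. unfold Ind, indI.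
      destruct (Rle_dec (Rabs (a * gridc M k + c)) H) as [h1|]; [|repeat destruct Rle_dec; lra].
      apply Rabs_le_inv in h1.
      destruct (Rle_dec ((- H - c) / a) (gridc M k)) as [|n]; [destruct (Rle_dec (gridc M k) ((H-c)/a)) as [|n]|]; try lra.
      * exfalso; apply n. apply (le_div_pos a (gridc M k)); lra.
      * exfalso; apply n. apply (div_le_pos a (gridc M k)); lra.
    + eapply Rle_trans; [apply cntG_ub; auto|].
      * unfold Rdiv; apply Rmult_le_compat_r; [apply Rlt_le, Rinv_0_lt_compat; lra| lra].
      * assert (E: ((H - c) / a - (- H - c) / a) = 2 * H / a) by (field; lra).
        rewrite E. assert (2 * H / a <= 8 * H).
        { unfold Rdiv. assert (/ a <= 4). { rewrite <- (Rinv_inv 4). apply Rinv_le_contravar; lra. }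
          nra. }
        set (q := 2 * H / _) in *. unfold Rdiv. assert (q * INR M <= 8 * H * INR M) by nra. lra.
  - rewrite Rabs_left in Ha by lra.
    apply Rle_trans with (cntG M ((H - c)/a) ((-H - c)/a)).
    + unfold cntG; apply sumR_le_in; intros k _. unfold Ind, indI.
      destruct (Rle_dec (Rabs (a * gridc M k + c)) H) as [h1|]; [|repeat destruct Rle_dec; lra].
      apply Rabs_le_inv in h1.
      destruct (Rle_dec ((H - c) / a) (gridc M k)) as [|n]; [destruct (Rle_dec (gridc M k) ((-H-c)/a)) as [|n]|]; try lra.
      * exfalso; apply n. apply (le_div_neg a (gridc M k)); lra.
      * exfalso; apply n. apply (div_le_neg a (gridc M k)); lra.
    + eapply Rle_trans; [apply cntG_ub; auto|].
      * apply (le_div_neg a); [lra|]. replace (a * ((H - c)/a)) with (H - c) by (field; lra); lra.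
      * assert (E: ((- H - c) / a - (H - c) / a) = 2 * H / (-a)) by (field; lra).
        rewrite E. assert (2 * H / (-a) <= 8 * H).
        { unfold Rdiv. assert (/ (-a) <= 4). { rewrite <- (Rinv_inv 4). apply Rinv_le_contravar; lra. }
          nra. }
        set (q := 2 * H / _) in *. unfold Rdiv. assert (q * INR M <= 8 * H * INR M) by nra. lra.
Qed.

Definition lowcnt M t h := sumR (fun k => Ind (gridc M k - t) h) (seq 0 M).

Lemma lowcnt_ge M t h lo hi : (0 < M)%nat -> t - h <= lo -> hi <= t + h -> -1 <= lo -> hi <= 1 ->
  (hi - lo) * INR M / 2 - 1 <= lowcnt M t h.
Proof.
  intros HM Hl Hh Hl1 Hh1. eapply Rle_trans; [apply cntG_lb; auto|].
  unfold cntG, lowcnt; apply sumR_le_in; intros k _. unfold Ind, indI.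
  destruct (Rle_dec lo (gridc M k)); [destruct (Rle_dec (gridc M k) hi)|]; try (destruct Rle_dec; lra).
  destruct Rle_dec as [|n]; [lra|]. exfalso; apply n. apply Rabs_le; lra.
Qed.

Lemma lowcnt_nonneg M t h : 0 <= lowcnt M t h.
Proof. apply sumR_nonneg; intros; apply Ind_01. Qed.

Lemma lowcnt_case M t h : (0 < M)%nat -> 0 < h <= 1 ->
  (Rabs t <= 1 - h -> h * INR M - 1 <= lowcnt M t h) /\
  (1 - h <= Rabs t <= 1 + h -> (1 - Rabs t + h) * INR M / 2 - 1 <= lowcnt M t h).
Proof.
  intros HM Hh. split; intros Ht.
  - apply Rabs_le_inv in Ht.
    eapply Rle_trans; [|apply (lowcnt_ge M t h (t - h) (t + h)); auto; lra]. lra.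
  - destruct (Rle_lt_dec 0 t).
    + rewrite Rabs_right in Ht |- * by lra.
      eapply Rle_trans; [|apply (lowcnt_ge M t h (t - h) 1); auto; lra]. lra.
    + rewrite Rabs_left in Ht |- * by lra.
      eapply Rle_trans; [|apply (lowcnt_ge M t h (-1) (t + h)); auto; lra]. lra.
Qed.

Lemma lowcnt_pair M t1 t2 h : (0 < M)%nat -> 0 < h <= 1 -> Rabs t1 + Rabs t2 <= 2 ->
  h * INR M - 2 <= lowcnt M t1 h + lowcnt M t2 h.
Proof.
  intros HM Hh Ht. assert (HMp: 0 < INR M) by (apply lt_0_INR; lia).
  destruct (lowcnt_case M t1 h HM Hh) as [A1 B1].
  destruct (lowcnt_case M t2 h HM Hh) as [A2 B2].
  pose proof (lowcnt_nonneg M t1 h). pose proof (lowcnt_nonneg M t2 h).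
  destruct (Rle_dec (Rabs t1) (1 - h)). { specialize (A1 r). lra. }
  destruct (Rle_dec (Rabs t2) (1 - h)). { specialize (A2 r). lra. }
  assert (X1 := B1 ltac:(lra)). assert (X2 := B2 ltac:(lra)).
  nra.
Qed.

Lemma pair_lower M sg al b h : (0 < M)%nat -> 0 < h <= 1 -> (sg = 1 \/ sg = -1) ->
  Rabs al <= 1 -> Rabs b <= 1 ->
  h * INR M - 2 <= sumR (fun k => Ind (sg * gridc M k + (al + b)) h) (seq 0 M)
                 + sumR (fun k => Ind (sg * gridc M k + (- al + b)) h) (seq 0 M).
Proof.
  intros HM Hh Hs Ha Hb.
  assert (E: forall c, sumR (fun k => Ind (sg * gridc M k + c) h) (seq 0 M) = lowcnt M (- sg * c) h).
  { intros c; unfold lowcnt; apply sumR_ext_in; intros k _. unfold Ind.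
    replace (Rabs (sg * gridc M k + c)) with (Rabs (gridc M k - - sg * c)); [reflexivity|].
    destruct Hs; subst sg.
    - f_equal; ring.
    - rewrite <- Rabs_Ropp; f_equal; ring. }
  rewrite !E. apply lowcnt_pair; auto.
  revert Ha Hb; destruct Hs; subst sg; unfold Rabs; repeat destruct Rcase_abs; lra.
Qed.

Definition mkpt (i : nat) (s a b : R) : pt3 :=
  match i with 0%nat => (s, a, b) | 1%nat => (a, s, b) | _ => (a, b, s) end.
Definition faces : list (nat * R) := (0%nat,1)::(0%nat,-1)::(1%nat,1)::(1%nat,-1)::(2%nat,1)::(2%nat,-1)::nil.
Definition G (M : nat) : list pt3 :=
  flat_map (fun fs => flat_map (fun k1 => map (fun k2 => mkpt (fst fs) (snd fs) (gridc M k1) (gridc M k2))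
     (seq 0 M)) (seq 0 M)) faces.
Definition dsum (M : nat) (e : R -> R -> R) : R :=
  sumR (fun k1 => sumR (fun k2 => e (gridc M k1) (gridc M k2)) (seq 0 M)) (seq 0 M).

Lemma sum_G M (f : pt3 -> R) : sumR f (G M) =
  sumR (fun fs => dsum M (fun g1 g2 => f (mkpt (fst fs) (snd fs) g1 g2))) faces.
Proof.
  unfold G. rewrite sumR_flat_map. apply sumR_ext_in; intros fs _.
  rewrite sumR_flat_map. unfold dsum. apply sumR_ext_in; intros k1 _. rewrite sumR_map. reflexivity.
Qed.

Lemma length_G M : INR (length (G M)) = 6 * INR M * INR M.
Proof.
  rewrite <- (Rmult_1_l (INR (length (G M)))), <- sumR_const, sum_G. unfold dsum.
  simpl. rewrite !sumR_const, length_seq. ring.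
Qed.

Lemma dsum_swap M e : dsum M e = dsum M (fun g1 g2 => e g2 g1).
Proof. unfold dsum. apply sumR_swap. Qed.

Lemma in_seq_lt k M : In k (seq 0 M) -> (k < M)%nat.
Proof. intros H; apply in_seq in H; lia. Qed.

Lemma Rabs_mult_le1 a b : Rabs a <= 1 -> Rabs b <= 1 -> Rabs (a * b) <= 1.
Proof. intros; rewrite Rabs_mult. pose proof (Rabs_pos a); pose proof (Rabs_pos b). nra. Qed.

Lemma fu2 M H a (c : R -> R) e : (0 < M)%nat -> 0 <= H -> 1/4 <= Rabs a ->
  (forall g1 g2, e g1 g2 = a * g2 + c g1) ->
  dsum M (fun g1 g2 => Ind (e g1 g2) H) <= INR M * (4 * H * INR M + 1).
Proof.
  intros HM HH Ha He. unfold dsum.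
  replace (INR M * (4 * H * INR M + 1)) with ((4 * H * INR M + 1) * INR (length (seq 0 M))) by (rewrite length_seq; ring).
  apply sumR_le_bound. intros k1 _.
  rewrite (sumR_ext_in _ (fun k2 => Ind (a * gridc M k2 + c (gridc M k1)) H)) by (intros; rewrite He; auto).
  apply up1; auto.
Qed.

Lemma fu1 M H a (c : R -> R) e : (0 < M)%nat -> 0 <= H -> 1/4 <= Rabs a ->
  (forall g1 g2, e g1 g2 = a * g1 + c g2) ->
  dsum M (fun g1 g2 => Ind (e g1 g2) H) <= INR M * (4 * H * INR M + 1).
Proof.
  intros HM HH Ha He. rewrite dsum_swap. apply (fu2 M H a c (fun g1 g2 => e g2 g1)); auto.
Qed.

Lemma fu0 M H e : (0 < M)%nat -> 0 <= H ->
  (forall g1 g2, -1 <= g1 <= 1 -> -1 <= g2 <= 1 -> H < Rabs (e g1 g2)) ->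
  dsum M (fun g1 g2 => Ind (e g1 g2) H) <= INR M * (4 * H * INR M + 1).
Proof.
  intros HM HH He. assert (HMp: 0 < INR M) by (apply lt_0_INR; lia).
  replace (dsum M (fun g1 g2 => Ind (e g1 g2) H)) with 0.
  - nra.
  - unfold dsum. symmetry. rewrite <- (Rmult_0_l (INR (length (seq 0 M)))), <- sumR_const.
    apply sumR_ext_in; intros k1 Hk1. rewrite <- (Rmult_0_l (INR (length (seq 0 M)))), <- sumR_const.
    apply sumR_ext_in; intros k2 Hk2. unfold Ind. destruct Rle_dec; auto.
    apply in_seq_lt, gridc_bound in Hk1. apply in_seq_lt, gridc_bound in Hk2.
    specialize (He _ _ Hk1 Hk2). lra.
Qed.

Lemma fp2 M h sg (e1 e2 : R -> R -> R) : (0 < M)%nat -> 0 < h <= 1 -> (sg = 1 \/ sg = -1) ->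
  (forall g1 g2, e1 g1 g2 = sg * g2 + e1 g1 0) -> (forall g1 g2, e2 g1 g2 = sg * g2 + e2 g1 0) ->
  (forall g, -1 <= g <= 1 -> exists al b, Rabs al <= 1 /\ Rabs b <= 1 /\ e1 g 0 = al + b /\ e2 g 0 = - al + b) ->
  INR M * (h * INR M - 2) <= dsum M (fun g1 g2 => Ind (e1 g1 g2) h) + dsum M (fun g1 g2 => Ind (e2 g1 g2) h).
Proof.
  intros HM Hh Hs H1 H2 Hab. unfold dsum. rewrite <- sumR_plus.
  replace (INR M * (h * INR M - 2)) with ((h * INR M - 2) * INR (length (seq 0 M))) by (rewrite length_seq; ring).
  apply sumR_ge_bound. intros k1 Hk1. apply in_seq_lt, gridc_bound in Hk1.
  destruct (Hab _ Hk1) as [al [b [Ha [Hb [E1 E2]]]]].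
  rewrite (sumR_ext_in _ (fun k2 => Ind (sg * gridc M k2 + (al + b)) h)) by (intros; rewrite H1, E1; auto).
  rewrite (sumR_ext_in (fun k2 => Ind (e2 _ _) h) (fun k2 => Ind (sg * gridc M k2 + (- al + b)) h)) by (intros; rewrite H2, E2; auto).
  apply pair_lower; auto.
Qed.

Lemma fp1 M h sg (e1 e2 : R -> R -> R) : (0 < M)%nat -> 0 < h <= 1 -> (sg = 1 \/ sg = -1) ->
  (forall g1 g2, e1 g1 g2 = sg * g1 + e1 0 g2) -> (forall g1 g2, e2 g1 g2 = sg * g1 + e2 0 g2) ->
  (forall g, -1 <= g <= 1 -> exists al b, Rabs al <= 1 /\ Rabs b <= 1 /\ e1 0 g = al + b /\ e2 0 g = - al + b) ->
  INR M * (h * INR M - 2) <= dsum M (fun g1 g2 => Ind (e1 g1 g2) h) + dsum M (fun g1 g2 => Ind (e2 g1 g2) h).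
Proof.
  intros HM Hh Hs H1 H2 Hab. rewrite (dsum_swap M (fun g1 g2 => Ind (e1 g1 g2) h)), (dsum_swap M (fun g1 g2 => Ind (e2 g1 g2) h)).
  apply (fp2 M h sg (fun g1 g2 => e1 g2 g1) (fun g1 g2 => e2 g2 g1)); auto.
Qed.

Lemma fu1' M H a e : (0 < M)%nat -> 0 <= H -> 1/4 <= Rabs a ->
  (forall g1 g2, e g1 g2 = a * g1 + e 0 g2) ->
  dsum M (fun g1 g2 => Ind (e g1 g2) H) <= INR M * (4 * H * INR M + 1).
Proof. intros; apply (fu1 M H a (fun g2 => e 0 g2)); auto. Qed.
Lemma fu2' M H a e : (0 < M)%nat -> 0 <= H -> 1/4 <= Rabs a ->
  (forall g1 g2, e g1 g2 = a * g2 + e g1 0) ->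
  dsum M (fun g1 g2 => Ind (e g1 g2) H) <= INR M * (4 * H * INR M + 1).
Proof. intros; apply (fu2 M H a (fun g1 => e g1 0)); auto. Qed.

Lemma fu_same M H sg s p q e : (0 < M)%nat -> 0 <= H < 1/2 -> (sg = 1 \/ sg = -1) -> (s = 1 \/ s = -1) ->
  Rabs p <= 1 -> Rabs q <= 1 ->
  (forall g1 g2, e g1 g2 = sg * s + p * g1 + q * g2) ->
  dsum M (fun g1 g2 => Ind (e g1 g2) H) <= INR M * (4 * H * INR M + 1).
Proof.
  intros HM HH Hsg Hs Hp Hq He.
  destruct (Rle_dec (1/4) (Rabs q)).
  - apply (fu2' M H q); auto; [lra|]. intros; rewrite !He; ring.
  - destruct (Rle_dec (1/4) (Rabs p)).
    + apply (fu1' M H p); auto; [lra|]. intros; rewrite !He; ring.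
    + apply fu0; auto; [lra|]. intros g1 g2 H1 H2. rewrite He.
      assert (Rabs (p * g1) <= 1/4). { rewrite Rabs_mult. assert (Rabs g1 <= 1) by (apply Rabs_le; lra).
        pose proof (Rabs_pos g1); pose proof (Rabs_pos p). nra. }
      assert (Rabs (q * g2) <= 1/4). { rewrite Rabs_mult. assert (Rabs g2 <= 1) by (apply Rabs_le; lra).
        pose proof (Rabs_pos g2); pose proof (Rabs_pos q). nra. }
      revert H0 H3. destruct Hsg, Hs; subst; unfold Rabs; repeat destruct Rcase_abs; lra.
Qed.

Lemma dsum_nonneg M e h : 0 <= dsum M (fun g1 g2 => Ind (e g1 g2) h).
Proof. unfold dsum; apply sumR_nonneg; intros; apply sumR_nonneg; intros; apply Ind_01. Qed.

Definition goodY (y : pt3) := exists j sg p q, (j = 0 \/ j = 1 \/ j = 2)%nat /\ (sg = 1 \/ sg = -1) /\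
  Rabs p <= 1 /\ Rabs q <= 1 /\ y = mkpt j sg p q.

Lemma in_G_good M y : In y (G M) -> goodY y.
Proof.
  unfold G. intros H. apply in_flat_map in H as [[i s] [Hf H]].
  apply in_flat_map in H as [k1 [Hk1 H]]. apply in_map_iff in H as [k2 [<- Hk2]].
  apply in_seq_lt, gridc_bound in Hk1. apply in_seq_lt, gridc_bound in Hk2.
  exists i, s, (gridc M k1), (gridc M k2).
  assert (Hr: Rabs (gridc M k1) <= 1 /\ Rabs (gridc M k2) <= 1) by (split; apply Rabs_le; lra).
  simpl in Hf; destruct Hf as [E|[E|[E|[E|[E|[E|[]]]]]]]; injection E; intros; subst;
  repeat split; tauto.
Qed.

Lemma Rabs_pm1 s : (s = 1 \/ s = -1) -> 1/4 <= Rabs s.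
Proof. intros [->| ->]; unfold Rabs; destruct Rcase_abs; lra. Qed.

Ltac solve_face_up sg s p q :=
    first [ apply (fu1' _ _ sg); [assumption|lra|apply Rabs_pm1; assumption|intros; simpl; ring]
          | apply (fu2' _ _ sg); [assumption|lra|apply Rabs_pm1; assumption|intros; simpl; ring]
          | apply (fu_same _ _ sg s p q); [assumption|lra|assumption|lra|assumption|assumption|intros; simpl; ring] ].

Lemma up_G M H y : (0 < M)%nat -> 0 <= H < 1/2 -> goodY y ->
  sumR (fun u => Ind (dot3 y u) H) (G M) <= 6 * (INR M * (4 * H * INR M + 1)).
Proof.
  intros HM HH [j [sg [p [q [Hj [Hs [Hp [Hq ->]]]]]]]].
  rewrite sum_G. unfold faces. cbn [sumR fst snd].
  destruct Hj as [->|[->| ->]];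
  repeat match goal with |- context [dsum M (fun g1 g2 => Ind (dot3 ?y (mkpt ?i ?s g1 g2)) H)] =>
    let X := fresh "X" in
    assert (X : dsum M (fun g1 g2 => Ind (dot3 y (mkpt i s g1 g2)) H) <= INR M * (4 * H * INR M + 1)) by solve_face_up sg s p q;
    revert X; generalize (dsum M (fun g1 g2 => Ind (dot3 y (mkpt i s g1 g2)) H)); intros end; lra.
Qed.

Ltac pairex p q :=
  let g := fresh "g" in let Hg := fresh "Hg" in
  intros g Hg;
  first [ exists p, (q * g); split; [assumption| split; [apply Rabs_mult_le1; [assumption| apply Rabs_le; lra] | split; simpl; ring]]
        | exists q, (p * g); split; [assumption| split; [apply Rabs_mult_le1; [assumption| apply Rabs_le; lra] | split; simpl; ring]] ].

Ltac solve_pair sg p q :=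
  first [ apply (fp1 _ _ sg); [assumption|lra|assumption|intros; simpl; ring|intros; simpl; ring| pairex p q ]
        | apply (fp2 _ _ sg); [assumption|lra|assumption|intros; simpl; ring|intros; simpl; ring| pairex p q ] ].

Lemma low_G M h y : (0 < M)%nat -> 0 < h <= 1 -> goodY y ->
  2 * (INR M * (h * INR M - 2)) <= sumR (fun u => Ind (dot3 y u) h) (G M).
Proof.
  intros HM Hh [j [sg [p [q [Hj [Hs [Hp [Hq ->]]]]]]]].
  rewrite sum_G. unfold faces. cbn [sumR fst snd].
  set (D := fun i s => dsum M (fun g1 g2 => Ind (dot3 (mkpt j sg p q) (mkpt i s g1 g2)) h)).
  change (2 * (INR M * (h * INR M - 2)) <= D 0%nat 1 + (D 0%nat (-1) + (D 1%nat 1 + (D 1%nat (-1) + (D 2%nat 1 + (D 2%nat (-1) + 0)))))).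
  assert (Nn : forall i s, 0 <= D i s) by (intros; apply dsum_nonneg).
  pose proof (Nn 0%nat 1); pose proof (Nn 0%nat (-1)); pose proof (Nn 1%nat 1); pose proof (Nn 1%nat (-1));
  pose proof (Nn 2%nat 1); pose proof (Nn 2%nat (-1)).
  destruct Hj as [->|[->| ->]].
  - assert (P1 : INR M * (h * INR M - 2) <= D 1%nat 1 + D 1%nat (-1)) by (unfold D; solve_pair sg p q).
    assert (P2 : INR M * (h * INR M - 2) <= D 2%nat 1 + D 2%nat (-1)) by (unfold D; solve_pair sg p q).
    lra.
  - assert (P1 : INR M * (h * INR M - 2) <= D 0%nat 1 + D 0%nat (-1)) by (unfold D; solve_pair sg p q).
    assert (P2 : INR M * (h * INR M - 2) <= D 2%nat 1 + D 2%nat (-1)) by (unfold D; solve_pair sg p q).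
    lra.
  - assert (P1 : INR M * (h * INR M - 2) <= D 0%nat 1 + D 0%nat (-1)) by (unfold D; solve_pair sg p q).
    assert (P2 : INR M * (h * INR M - 2) <= D 1%nat 1 + D 1%nat (-1)) by (unfold D; solve_pair sg p q).
    lra.
Qed.

Definition nrm (u : pt3) : R := sqrt (dot3 u u).
Definition nz (u : pt3) : pt3 := let '(a, b, c) := u in (a / nrm u, b / nrm u, c / nrm u).

Lemma goodY_norm u : goodY u -> 1 <= dot3 u u <= 3.
Proof.
  intros [j [sg [p [q [Hj [Hs [Hp [Hq ->]]]]]]]].
  assert (p * p <= 1) by (revert Hp; unfold Rabs; destruct Rcase_abs; nra).
  assert (q * q <= 1) by (revert Hq; unfold Rabs; destruct Rcase_abs; nra).
  assert (0 <= p * p) by nra. assert (0 <= q*q) by nra.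
  destruct Hj as [->|[->| ->]]; destruct Hs as [->| ->]; simpl; lra.
Qed.

Lemma nrm_bounds u : goodY u -> 1 <= nrm u <= 2.
Proof.
  intros H; apply goodY_norm in H. unfold nrm. split.
  - rewrite <- sqrt_1. apply sqrt_le_1_alt; lra.
  - rewrite <- (sqrt_square 2) by lra. apply sqrt_le_1_alt; lra.
Qed.

Lemma dot_nz y u : 0 < dot3 u u -> dot3 y (nz u) = dot3 y u / nrm u.
Proof.
  intros H. assert (0 < nrm u) by (apply sqrt_lt_R0; auto).
  destruct u as [[a b] c]; destruct y as [[y1 y2] y3]. unfold nz. simpl. field. lra.
Qed.

Lemma nz_sphere u : 0 < dot3 u u -> on_sphere (nz u).
Proof.
  intros H. unfold on_sphere. assert (Hn: 0 < nrm u) by (apply sqrt_lt_R0; auto).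
  assert (E: nrm u * nrm u = dot3 u u) by (apply sqrt_sqrt; lra).
  destruct u as [[a b] c].
  assert (E': nrm (a,b,c) * nrm (a,b,c) = a*a+b*b+c*c) by exact E.
  unfold nz. set (n := nrm (a,b,c)) in *. unfold dot3.
  replace (a / n * (a / n) + b / n * (b / n) + c / n * (c / n)) with ((a * a + b * b + c * c) / (n * n)) by (field; lra).
  rewrite <- E'. field. lra.
Qed.

Lemma Ind_low y u h : goodY u -> 0 <= h -> Ind (dot3 y u) h <= Ind (dot3 y (nz u)) h.
Proof.
  intros Hu Hh. pose proof (nrm_bounds u Hu). pose proof (goodY_norm u Hu).
  rewrite dot_nz by lra. unfold Ind.
  destruct (Rle_dec (Rabs (dot3 y u)) h); [|destruct Rle_dec; lra].
  destruct Rle_dec as [|n]; [lra|]. exfalso; apply n.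
  unfold Rdiv; rewrite Rabs_mult, Rabs_inv, (Rabs_right (nrm u)) by lra.
  assert (/ nrm u <= 1) by (rewrite <- Rinv_1; apply Rinv_le_contravar; lra).
  assert (0 < / nrm u) by (apply Rinv_0_lt_compat; lra).
  pose proof (Rabs_pos (dot3 y u)). nra.
Qed.

Lemma Ind_high y u H : goodY u -> Ind (dot3 y (nz u)) H <= Ind (dot3 y u) (2 * H).
Proof.
  intros Hu. pose proof (nrm_bounds u Hu). pose proof (goodY_norm u Hu).
  rewrite dot_nz by lra. unfold Ind.
  destruct (Rle_dec (Rabs (dot3 y u / nrm u)) H) as [r|]; [|destruct Rle_dec; lra].
  destruct Rle_dec as [|n]; [lra|]. exfalso; apply n.
  unfold Rdiv in r; rewrite Rabs_mult, Rabs_inv, (Rabs_right (nrm u)) in r by lra.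
  assert (E: Rabs (dot3 y u) = (Rabs (dot3 y u) * / nrm u) * nrm u) by (field; lra).
  rewrite E. pose proof (Rabs_pos (dot3 y u)).
  assert (0 <= Rabs (dot3 y u) * / nrm u) by (apply Rmult_le_pos; [lra| apply Rlt_le, Rinv_0_lt_compat; lra]).
  nra.
Qed.

Lemma near_nat M r : (0 < M)%nat -> 0 <= r <= INR M -> exists k, (k < M)%nat /\ INR k <= r <= INR k + 1.
Proof.
  induction M as [|M IH]; intros HM Hr. lia.
  destruct M as [|M'].
  - exists 0%nat; simpl in *; split; [lia|lra].
  - destruct (Rle_dec r (INR (S M'))).
    + destruct (IH ltac:(lia) ltac:(lra)) as [k [Hk Hk']]. exists k; split; [lia|lra].
    + exists (S M'); split; [lia|]. rewrite (S_INR (S M')) in Hr. lra.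
Qed.

Lemma grid_near M z : (0 < M)%nat -> -1 <= z <= 1 -> exists k, (k < M)%nat /\ Rabs (gridc M k - z) <= 1 / INR M.
Proof.
  intros HM Hz. assert (HMp: 0 < INR M) by (apply lt_0_INR; lia).
  destruct (near_nat M (INR M * (z + 1) / 2) HM) as [k [Hk Hr]]. { split; nra. }
  exists k; split; auto. apply Rabs_le.
  assert (E: gridc M k - z = (2 * INR k + 1 - INR M * (z + 1)) / INR M) by (unfold gridc; field; lra).
  rewrite E. split.
  - apply le_div_pos; [lra|]. replace (INR M * (- (1 / INR M))) with (-1) by (field; lra). lra.
  - apply div_le_pos; [lra|]. replace (INR M * (1 / INR M)) with 1 by (field; lra). lra.
Qed.

Lemma net_case M vj a b : (0 < M)%nat -> vj * vj + a * a + b * b = 1 -> Rabs a <= Rabs vj -> Rabs b <= Rabs vj ->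
  exists sg k1 k2 lam, (sg = 1 \/ sg = -1) /\ (k1 < M)%nat /\ (k2 < M)%nat /\ 1/2 <= lam <= 1 /\
    vj = lam * sg /\ Rabs (a - lam * gridc M k1) <= 1 / INR M /\ Rabs (b - lam * gridc M k2) <= 1 / INR M.
Proof.
  intros HM Hn Ha Hb. assert (HMp: 0 < INR M) by (apply lt_0_INR; lia).
  set (lam := Rabs vj).
  assert (Hl: 1/2 <= lam <= 1).
  { unfold lam. revert Ha Hb. unfold Rabs; repeat destruct Rcase_abs; intros; split; nra. }
  assert (Ha1: -1 <= a / lam <= 1).
  { split; [apply le_div_pos| apply div_le_pos]; try lra; revert Ha; unfold lam, Rabs; repeat destruct Rcase_abs; lra. }
  assert (Hb1: -1 <= b / lam <= 1).
  { split; [apply le_div_pos| apply div_le_pos]; try lra; revert Hb; unfold lam, Rabs; repeat destruct Rcase_abs; lra. }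
  destruct (grid_near M _ HM Ha1) as [k1 [Hk1 E1]].
  destruct (grid_near M _ HM Hb1) as [k2 [Hk2 E2]].
  exists (if Rle_dec 0 vj then 1 else -1), k1, k2, lam.
  split; [destruct Rle_dec; auto|]. split; auto. split; auto. split; auto. split.
  - unfold lam, Rabs. destruct Rcase_abs, Rle_dec; lra.
  - split.
    + replace (a - lam * gridc M k1) with (- lam * (gridc M k1 - a / lam)) by (field; lra).
      rewrite Rabs_mult, Rabs_Ropp, (Rabs_right lam) by lra.
      apply Rle_trans with (1 * (1 / INR M)); [|lra].
      apply Rmult_le_compat; try lra; apply Rabs_pos.
    + replace (b - lam * gridc M k2) with (- lam * (gridc M k2 - b / lam)) by (field; lra).
      rewrite Rabs_mult, Rabs_Ropp, (Rabs_right lam) by lra.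
      apply Rle_trans with (1 * (1 / INR M)); [|lra].
      apply Rmult_le_compat; try lra; apply Rabs_pos.
Qed.

Lemma sphere_coord x1 x2 x3 : on_sphere (x1, x2, x3) -> Rabs x1 <= 1 /\ Rabs x2 <= 1 /\ Rabs x3 <= 1.
Proof.
  unfold on_sphere; simpl; intros H.
  repeat split; apply Rabs_le; split; nra.
Qed.

Lemma two_term A B xa xb e : Rabs A <= e -> Rabs B <= e -> Rabs xa <= 1 -> Rabs xb <= 1 ->
  Rabs (A * xa + B * xb) <= 2 * e.
Proof.
  intros. eapply Rle_trans; [apply Rabs_triang|]. rewrite !Rabs_mult.
  pose proof (Rabs_pos A); pose proof (Rabs_pos B); pose proof (Rabs_pos xa); pose proof (Rabs_pos xb). nra.
Qed.

Lemma mkpt_in_G M j sg k1 k2 : (j = 0 \/ j = 1 \/ j = 2)%nat -> (sg = 1 \/ sg = -1) -> (k1 < M)%nat -> (k2 < M)%nat ->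
  In (mkpt j sg (gridc M k1) (gridc M k2)) (G M).
Proof.
  intros Hj Hs H1 H2. unfold G. apply in_flat_map. exists (j, sg). split.
  - simpl. destruct Hj as [->|[->| ->]]; destruct Hs as [->| ->]; tauto.
  - apply in_flat_map. exists k1. split; [apply in_seq; lia|].
    apply in_map_iff. exists k2. split; [reflexivity| apply in_seq; lia].
Qed.

Lemma net M v : (0 < M)%nat -> on_sphere v ->
  exists y, In y (G M) /\ exists lam, 1/2 <= lam <= 1 /\
    forall x, on_sphere x -> Rabs (dot3 v x - lam * dot3 y x) <= 2 / INR M.
Proof.
  intros HM Hv. destruct v as [[v1 v2] v3]. unfold on_sphere in Hv; simpl in Hv.
  replace (2 / INR M) with (2 * (1 / INR M)) by (unfold Rdiv; ring).
  destruct (Rle_dec (Rabs v2) (Rabs v1)); destruct (Rle_dec (Rabs v3) (Rabs v1));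
  destruct (Rle_dec (Rabs v3) (Rabs v2)).
  all: first
   [ destruct (net_case M v1 v2 v3 HM ltac:(lra) ltac:(lra) ltac:(lra)) as [sg [k1 [k2 [lam [Hs [Hk1 [Hk2 [Hl [E [A1 A2]]]]]]]]]];
     exists (mkpt 0 sg (gridc M k1) (gridc M k2)); split; [apply mkpt_in_G; auto|];
     exists lam; split; auto; intros [[x1 x2] x3] Hx; apply sphere_coord in Hx as [X1 [X2 X3]];
     simpl; rewrite E;
     replace (lam * sg * x1 + v2 * x2 + v3 * x3 - lam * (sg * x1 + gridc M k1 * x2 + gridc M k2 * x3))
       with ((v2 - lam * gridc M k1) * x2 + (v3 - lam * gridc M k2) * x3) by ring;
     apply two_term; auto
   | destruct (net_case M v2 v1 v3 HM ltac:(lra) ltac:(lra) ltac:(lra)) as [sg [k1 [k2 [lam [Hs [Hk1 [Hk2 [Hl [E [A1 A2]]]]]]]]]];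
     exists (mkpt 1 sg (gridc M k1) (gridc M k2)); split; [apply mkpt_in_G; auto|];
     exists lam; split; auto; intros [[x1 x2] x3] Hx; apply sphere_coord in Hx as [X1 [X2 X3]];
     simpl; rewrite E;
     replace (v1 * x1 + lam * sg * x2 + v3 * x3 - lam * (gridc M k1 * x1 + sg * x2 + gridc M k2 * x3))
       with ((v1 - lam * gridc M k1) * x1 + (v3 - lam * gridc M k2) * x3) by ring;
     apply two_term; auto
   | destruct (net_case M v3 v1 v2 HM ltac:(lra) ltac:(lra) ltac:(lra)) as [sg [k1 [k2 [lam [Hs [Hk1 [Hk2 [Hl [E [A1 A2]]]]]]]]]];
     exists (mkpt 2 sg (gridc M k1) (gridc M k2)); split; [apply mkpt_in_G; auto|];
     exists lam; split; auto; intros [[x1 x2] x3] Hx; apply sphere_coord in Hx as [X1 [X2 X3]];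
     simpl; rewrite E;
     replace (v1 * x1 + v2 * x2 + lam * sg * x3 - lam * (gridc M k1 * x1 + gridc M k2 * x2 + sg * x3))
       with ((v1 - lam * gridc M k1) * x1 + (v2 - lam * gridc M k2) * x2) by ring;
     apply two_term; auto ].
Qed.

Lemma exp_pow_N x n : exp x ^ n = exp (INR n * x).
Proof.
  induction n; simpl. rewrite Rmult_0_l, exp_0; auto.
  rewrite IHn. destruct n. simpl. rewrite Rmult_0_l, exp_0, Rmult_1_l, Rmult_1_r; auto.
  rewrite <- exp_plus. f_equal. rewrite S_INR. ring.
Qed.

Lemma exp_le_mono x y : x <= y -> exp x <= exp y.
Proof. intros [H|H]; [apply Rlt_le, exp_increasing; auto| subst; lra]. Qed.

Lemma ln_le_mono x y : 0 < x -> x <= y -> ln x <= ln y.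
Proof. intros Hx [H|H]; [apply Rlt_le, ln_increasing; auto| subst; lra]. Qed.

Lemma ln_le_xm1 x : 0 < x -> ln x <= x - 1.
Proof. intros H. pose proof (exp_ineq1_le (ln x)). rewrite exp_ln in H0; auto; lra. Qed.

Lemma exp1_gt2 : 2 < exp 1.
Proof. pose proof (exp_ineq1 1 ltac:(lra)); lra. Qed.


Lemma exp_m4 : exp (-4) < 1/12.
Proof.
  assert (E: exp 4 = exp 1 ^ 4) by (rewrite exp_pow_N; f_equal; simpl; ring).
  assert (exp 4 >= 16). { rewrite E. pose proof exp1_gt2. simpl. assert (exp 1 * exp 1 > 4) by nra. nra. }
  assert (exp (-4) * exp 4 = 1) by (rewrite <- exp_plus; replace (-4 + 4) with 0 by ring; apply exp_0).
  pose proof (exp_pos (-4)). nra.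
Qed.

Lemma asym N : 1000 <= N -> 4 <= ln N /\ 80 * ln N + 16 < N.
Proof.
  intros HN. split.
  - assert (exp 4 <= N).
    { assert (E: exp 4 = exp 1 ^ 4) by (rewrite exp_pow_N; f_equal; simpl; ring).
      rewrite E. pose proof exp_le_3. pose proof (exp_pos 1).
      assert (exp 1 ^ 4 <= 3 ^ 4) by (apply pow_incr; lra). simpl in H1. lra. }
    rewrite <- (ln_exp 4). apply ln_le_mono; auto. apply exp_pos.
  - assert (E: N = (N / 256) * 2 ^ 8) by (simpl; field).
    assert (L: ln N = ln (N / 256) + INR 8 * ln 2).
    { rewrite E at 1. rewrite ln_mult; [rewrite ln_pow by lra; reflexivity| |].
      - unfold Rdiv; apply Rmult_lt_0_compat; [lra| apply Rinv_0_lt_compat; lra].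
      - apply pow_lt; lra. }
    assert (ln 2 < 1). { rewrite <- (ln_exp 1). apply ln_increasing; [lra| apply exp1_gt2]. }
    assert (ln (N/256) <= N/256 - 1) by (apply ln_le_xm1; unfold Rdiv; apply Rmult_lt_0_compat; [lra| apply Rinv_0_lt_compat; lra]).
    simpl INR in L. lra.
Qed.

Lemma frac_le1 x d : 0 < d -> x <= d -> x / d <= 1.
Proof. intros Hd H. unfold Rdiv. rewrite <- (Rinv_r d) by lra. apply Rmult_le_compat_r; [|lra].
  apply Rlt_le, Rinv_0_lt_compat; lra. Qed.
Lemma frac_nonneg x d : 0 < d -> 0 <= x -> 0 <= x / d.
Proof. intros Hd H. unfold Rdiv. apply Rmult_le_pos; [lra| apply Rlt_le, Rinv_0_lt_compat; lra]. Qed.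

Lemma main_ineq N (n : nat) (t : nat) : INR n = N -> 1000 <= N -> 400 * ln N < INR t ->
  6 * (N * N) * ((1 - (10 * ln N - 4) / (3 * N)) ^ n + (1 + 2 * ((160 * ln N + 33) / N)) ^ n / 3 ^ t) < 1.
Proof.
  intros En HN Ht. destruct (asym N HN) as [HL1 HL2]. set (L := ln N) in *.
  assert (HNp: 0 < N) by lra.
  assert (P1: (1 - (10 * L - 4) / (3 * N)) ^ n <= exp (- (10 * L - 4) / 3)).
  { eapply Rle_trans. apply pow_incr. split.
    - assert ((10 * L - 4) / (3 * N) <= 1) by (apply frac_le1; lra). lra.
    - pose proof (exp_ineq1_le (- ((10 * L - 4) / (3 * N)))). rewrite <- Rminus_def in H. apply H.
    - rewrite exp_pow_N, En. apply Req_le; f_equal. field. lra. }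
  assert (P2: (1 + 2 * ((160 * L + 33) / N)) ^ n <= exp (320 * L + 66)).
  { eapply Rle_trans. apply pow_incr. split.
    - assert (0 <= (160 * L + 33) / N) by (apply frac_nonneg; lra). lra.
    - apply exp_ineq1_le.
    - rewrite exp_pow_N, En. apply Req_le; f_equal. field. lra. }
  assert (P3: exp (400 * L) <= 3 ^ t).
  { apply Rle_trans with (exp 1 ^ t).
    - rewrite exp_pow_N. apply exp_le_mono. lra.
    - apply pow_incr. pose proof exp_le_3. pose proof (exp_pos 1). lra. }
  assert (P4: N * N = exp (2 * L)).
  { replace (2 * L) with (L + L) by ring. rewrite exp_plus. unfold L. rewrite exp_ln; lra. }
  assert (Q1: 6 * (N * N) * (1 - (10 * L - 4) / (3 * N)) ^ n <= 6 * exp (-4)).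
  { rewrite P4. assert (0 <= (1 - (10 * L - 4) / (3 * N)) ^ n).
    { apply pow_le. assert ((10 * L - 4) / (3 * N) <= 1) by (apply frac_le1; lra). lra. }
    pose proof (exp_pos (2 * L)).
    apply Rle_trans with (6 * (exp (2 * L) * exp (- (10 * L - 4) / 3))).
    - rewrite <- Rmult_assoc. apply Rmult_le_compat_l; [lra| auto].
    - rewrite <- exp_plus. apply Rmult_le_compat_l; [lra|]. apply exp_le_mono. lra. }
  assert (Q2: 6 * (N * N) * ((1 + 2 * ((160 * L + 33) / N)) ^ n / 3 ^ t) <= 6 * exp (-4)).
  { rewrite P4. pose proof (exp_pos (400 * L)).
    assert (0 < 3 ^ t) by (apply pow_lt; lra).
    assert (0 <= (1 + 2 * ((160 * L + 33) / N)) ^ n).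
    { apply pow_le. assert (0 <= (160 * L + 33) / N) by (apply frac_nonneg; lra). lra. }
    apply Rle_trans with (6 * (exp (2 * L) * (exp (320 * L + 66) / exp (400 * L)))).
    - rewrite <- Rmult_assoc. apply Rmult_le_compat_l; [pose proof (exp_pos (2*L)); lra|].
      unfold Rdiv. apply Rmult_le_compat; auto.
      + apply Rlt_le, Rinv_0_lt_compat; auto.
      + apply Rinv_le_contravar; auto.
    - unfold Rdiv. rewrite <- exp_Ropp, <- !exp_plus. apply Rmult_le_compat_l; [lra|]. apply exp_le_mono. lra. }
  pose proof exp_m4. rewrite Rmult_plus_distr_l. lra.
Qed.

Definition Ib (x h : R) : bool := if Rle_dec (Rabs x) h then true else false.

Lemma Ind_Ib x h : Ind x h = if Ib x h then 1 else 0.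
Proof. unfold Ind, Ib; destruct Rle_dec; auto. Qed.

Lemma prod_f2 (F : pt3 -> R) H L :
  prodR (fun a => 1 + 2 * Ind (F a) H) L = 3 ^ length (filter (fun a => Ib (F a) H) L).
Proof.
  induction L; simpl; auto. rewrite IHL, Ind_Ib. destruct (Ib (F a) H); simpl; ring.
Qed.

Lemma prod_f1_lt (F : pt3 -> R) h L :
  prodR (fun a => 1 - Ind (F a) h) L < 1 -> exists a, In a L /\ Rabs (F a) <= h.
Proof.
  induction L; simpl; intros Hl. lra.
  destruct (Rle_dec (Rabs (F a)) h).
  - exists a; auto.
  - assert (E: Ind (F a) h = 0) by (unfold Ind; destruct Rle_dec; [contradiction|auto]).
    rewrite E in Hl. destruct IHL as [b [Hb Hb']]. lra. exists b; auto.
Qed.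

Lemma prodR_nonneg {A} (f : A -> R) L : (forall a, In a L -> 0 <= f a) -> 0 <= prodR f L.
Proof.
  induction L; simpl; intros H; [lra|]. apply Rmult_le_pos; auto.
Qed.

Lemma filter_map_S (q : nat -> bool) l : length (filter q (map S l)) = length (filter (fun i => q (S i)) l).
Proof. induction l; simpl; auto. destruct (q (S a)); simpl; auto. Qed.

Lemma filter_nth {T} (q : T -> bool) d L :
  length (filter (fun i => q (nth i L d)) (seq 0 (length L))) = length (filter q L).
Proof.
  induction L; simpl; auto.
  rewrite <- seq_shift. destruct (q a); simpl; rewrite filter_map_S; simpl; rewrite IHL; auto.
Qed.

Lemma filter_len_mono {T} (p q : T -> bool) l : (forall x, In x l -> p x = true -> q x = true) ->
  (length (filter p l) <= length (filter q l))%nat.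
Proof.
  induction l; simpl; intros H; auto.
  destruct (p a) eqn:Ep.
  - rewrite (H a (or_introl eq_refl) Ep). simpl. apply le_n_S, IHl; auto.
  - destruct (q a); simpl; [apply le_S|]; apply IHl; auto.
Qed.

Lemma sum_term_le {A} (g : A -> R) V y : In y V -> (forall z, In z V -> 0 <= g z) -> g y <= sumR g V.
Proof.
  induction V; simpl; intros Hy Hn. contradiction.
  destruct Hy as [->|Hy].
  - pose proof (sumR_nonneg g V (fun z Hz => Hn z (or_intror Hz))). pose proof (Hn y (or_introl eq_refl)). lra.
  - pose proof (IHV Hy (fun z Hz => Hn z (or_intror Hz))). pose proof (Hn a (or_introl eq_refl)). lra.
Qed.



Lemma choose (N : nat) (t : nat) :
  1000 <= INR N -> 400 * ln (INR N) < INR t ->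
  let n := INR N in
  let h := 10 * ln n / n - 2 / n in
  let H := 2 * (10 * ln n / n) + 4 / n in
  exists L, length L = N /\ (forall a, In a L -> In a (G N)) /\
    forall y, In y (G N) -> (exists a, In a L /\ Rabs (dot3 y (nz a)) <= h) /\
      (length (filter (fun a => Ib (dot3 y (nz a)) H) L) < t)%nat.
Proof.
  intros HN Ht n h H.
  destruct (asym n HN) as [HL1 HL2].
  assert (Hn: 0 < n) by (unfold n; lra).
  assert (HM: (0 < N)%nat) by (apply INR_lt; simpl; unfold n in *; lra).
  set (GG := G N).
  set (f1 := fun y a => 1 - Ind (dot3 y (nz a)) h).
  set (f2 := fun y a => 1 + 2 * Ind (dot3 y (nz a)) H).
  set (Bad := fun L => sumR (fun y => prodR (f1 y) L + prodR (f2 y) L / 3 ^ t) GG).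
  set (m := 6 * n * n).
  assert (Hm: INR (length GG) = m) by (unfold GG, m, n; apply length_G).
  assert (Hh: 0 < h <= 1).
  { unfold h. replace (10 * ln n / n - 2 / n) with ((10 * ln n - 2) / n) by (field; lra).
    split; [apply Rdiv_lt_0_compat; lra| apply frac_le1; lra]. }
  assert (HH: 0 <= 2 * H < 1/2).
  { unfold H. replace (2 * (2 * (10 * ln n / n) + 4 / n)) with ((40 * ln n + 8) / n) by (field; lra).
    split; [apply frac_nonneg; lra|]. apply Rmult_lt_reg_r with n; auto.
    replace ((40 * ln n + 8) / n * n) with (40 * ln n + 8) by (field; lra). lra. }
  assert (B1: forall y, In y GG -> 0 <= sumR (f1 y) GG <= m * (1 - (10 * ln n - 4) / (3 * n))).
  { intros y Hy. apply in_G_good in Hy. split.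
    - apply sumR_nonneg; intros; unfold f1; pose proof (Ind_01 (dot3 y (nz a)) h); lra.
    - unfold f1. rewrite (sumR_ext_in _ (fun a => 1 + (-1) * Ind (dot3 y (nz a)) h)) by (intros; ring).
      rewrite sumR_plus, sumR_scal, sumR_const, Hm.
      assert (sumR (fun a => Ind (dot3 y a) h) GG <= sumR (fun a => Ind (dot3 y (nz a)) h) GG).
      { apply sumR_le_in; intros a Ha. apply Ind_low; [apply (in_G_good N); auto| lra]. }
      pose proof (low_G N h y HM Hh Hy). fold GG in H1.
      unfold m. replace (6 * n * n * (1 - (10 * ln n - 4) / (3 * n))) with (6 * n * n - 2 * (n * (h * n - 2))).
      + fold n in H1. lra.
      + unfold h. field. lra. }
  assert (B2: forall y, In y GG -> 0 <= sumR (f2 y) GG <= m * (1 + 2 * ((160 * ln n + 33) / n))).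
  { intros y Hy. apply in_G_good in Hy. split.
    - apply sumR_nonneg; intros; unfold f2; pose proof (Ind_01 (dot3 y (nz a)) H); lra.
    - unfold f2. rewrite sumR_plus, sumR_scal, sumR_const, Hm.
      assert (sumR (fun a => Ind (dot3 y (nz a)) H) GG <= sumR (fun a => Ind (dot3 y a) (2 * H)) GG).
      { apply sumR_le_in; intros a Ha. apply Ind_high. apply (in_G_good N); auto. }
      pose proof (up_G N (2 * H) y HM HH Hy). fold GG in H1.
      unfold m. replace (6 * n * n * (1 + 2 * ((160 * ln n + 33) / n))) with (6 * n * n + 2 * (6 * (n * (4 * (2 * H) * n + 1)))).
      + fold n in H1. lra.
      + unfold H. field. lra. }
  assert (Tot: sumR Bad (allseq N GG) < INR (length (allseq N GG))).
  { rewrite allseq_length, Hm. unfold Bad. rewrite sumR_swap.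
    rewrite (sumR_ext_in _ (fun y => (sumR (f1 y) GG) ^ N + (sumR (f2 y) GG) ^ N / 3 ^ t)).
    2:{ intros y _. rewrite sumR_plus, sumR_div, !allseq_sum. reflexivity. }
    eapply Rle_lt_trans.
    - apply (sumR_le_bound _ _ (m ^ N * ((1 - (10 * ln n - 4) / (3 * n)) ^ N + (1 + 2 * ((160 * ln n + 33) / n)) ^ N / 3 ^ t))).
      intros y Hy. destruct (B1 y Hy), (B2 y Hy).
      assert (0 < 3 ^ t) by (apply pow_lt; lra).
      rewrite Rmult_plus_distr_l. apply Rplus_le_compat.
      + rewrite <- Rpow_mult_distr. apply pow_incr; lra.
      + unfold Rdiv. rewrite <- Rmult_assoc, <- Rpow_mult_distr. apply Rmult_le_compat_r.
        * apply Rlt_le, Rinv_0_lt_compat; auto.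
        * apply pow_incr; lra.
    - rewrite Hm. pose proof (main_ineq n N t eq_refl HN Ht).
      assert (0 < m ^ N) by (apply pow_lt; unfold m; nra).
      unfold m in *. nra. }
  destruct (sumR_lt_exists _ _ Tot) as [L [HL HB]].
  destruct (allseq_in _ _ _ HL) as [Hlen HLG].
  exists L. split; auto. split; auto.
  intros y Hy. fold GG in Hy.
  assert (Hnn: forall z, In z GG -> 0 <= prodR (f1 z) L + prodR (f2 z) L / 3 ^ t).
  { intros z _. apply Rplus_le_le_0_compat.
    - apply prodR_nonneg; intros a _; unfold f1; pose proof (Ind_01 (dot3 z (nz a)) h); lra.
    - apply frac_nonneg; [apply pow_lt; lra|]. apply prodR_nonneg; intros a _; unfold f2; pose proof (Ind_01 (dot3 z (nz a)) H); lra. }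
  pose proof (sum_term_le _ GG y Hy Hnn) as Hle. fold (Bad L) in Hle.
  assert (N1: 0 <= prodR (f1 y) L) by (apply prodR_nonneg; intros a _; unfold f1; pose proof (Ind_01 (dot3 y (nz a)) h); lra).
  assert (N2: 0 <= prodR (f2 y) L / 3 ^ t) by (apply frac_nonneg; [apply pow_lt; lra|]; apply prodR_nonneg; intros a _; unfold f2; pose proof (Ind_01 (dot3 y (nz a)) H); lra).
  split.
  - apply (prod_f1_lt (fun a => dot3 y (nz a))). unfold f1 in Hle. lra.
  - assert (C: prodR (f2 y) L < 3 ^ t).
    { assert (0 < 3 ^ t) by (apply pow_lt; lra).
      assert (prodR (f2 y) L / 3 ^ t < 1) by lra.
      apply (Rmult_lt_compat_r (3 ^ t)) in H1; auto. unfold Rdiv in H1.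
      rewrite Rmult_assoc, Rinv_l, Rmult_1_r, Rmult_1_l in H1; lra. }
    unfold f2 in C. rewrite (prod_f2 (fun a => dot3 y (nz a))) in C.
    destruct (Nat.lt_ge_cases (length (filter (fun a => Ib (dot3 y (nz a)) H) L)) t) as [|Hge]; auto.
    exfalso. pose proof (Rle_pow 3 _ _ ltac:(lra) Hge). lra.
Qed.

Lemma choose_t r : 0 <= r -> exists t : nat, r < INR t <= r + 1.
Proof.
  intros Hr. destruct (archimed r) as [H1 H2].
  assert (Hz: (0 <= up r)%Z). { apply le_IZR. lra. }
  exists (Z.to_nat (up r)). rewrite INR_IZR_INZ, Z2Nat.id by auto. lra.
Qed.

Theorem theorem1p4 :
  exists c : R, exists N0 : nat, forall N : nat, Peano.le N0 N ->
    let w := 10 * ln (INR N) / INR N in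
    exists centers : nat -> pt3,
      (forall i, Peano.lt i N -> on_sphere (centers i)) /\
      (forall v, on_sphere v -> exists i, Peano.lt i N /\ in_strip (centers i) w v) /\
      (forall v, on_sphere v -> INR (cover_count centers N w v) <= c * ln (INR N)).
Proof.
  exists 400, 1000%nat. intros N HN w.
  assert (HNr: 1000 <= INR N).
  { replace 1000 with (INR 1000). apply le_INR; auto. rewrite INR_IZR_INZ. reflexivity. }
  set (n := INR N) in *.
  destruct (asym n HNr) as [HL1 HL2].
  assert (Hn: 0 < n) by lra.
  assert (HM: (0 < N)%nat) by (apply INR_lt; simpl; unfold n in *; lra).
  destruct (choose_t (400 * ln n) ltac:(lra)) as [t [Ht1 Ht2]].
  destruct (choose N t HNr Ht1) as [L [Hlen [HLG HL]]].
  fold n in HL.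
  set (h := 10 * ln n / n - 2 / n) in *. set (H := 2 * (10 * ln n / n) + 4 / n) in *.
  set (d := (1, 0, 0) : pt3).
  assert (Hsph: forall a, In a L -> on_sphere (nz a)).
  { intros a Ha. apply nz_sphere. pose proof (goodY_norm a (in_G_good N a (HLG a Ha))). lra. }
  exists (fun i => nz (nth i L d)).
  split; [|split].
  - intros i Hi. apply Hsph, nth_In. lia.
  - intros v Hv. destruct (net N v HM Hv) as [y [Hy [lam [Hl Hb]]]].
    destruct (HL y Hy) as [[a [Ha Ha']] _].
    destruct (In_nth L a d Ha) as [i [Hi Ei]].
    exists i. split; [lia|]. split; auto. rewrite Ei.
    specialize (Hb (nz a) (Hsph a Ha)). fold n in Hb.
    assert (Hw: w = h + 2 / n) by (unfold w, h, n; ring).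
    rewrite Hw.
    assert (h >= 0).
    { unfold h. replace (10 * ln n / n - 2 / n) with ((10 * ln n - 2) / n) by (field; lra).
      apply Rle_ge, frac_nonneg; lra. }
    assert (Rabs (lam * dot3 y (nz a)) <= h).
    { rewrite Rabs_mult, Rabs_right by lra. pose proof (Rabs_pos (dot3 y (nz a))). nra. }
    pose proof (Rabs_triang (dot3 v (nz a) - lam * dot3 y (nz a)) (lam * dot3 y (nz a))).
    replace (dot3 v (nz a) - lam * dot3 y (nz a) + lam * dot3 y (nz a)) with (dot3 v (nz a)) in H2 by ring.
    lra.
  - intros v Hv. destruct (net N v HM Hv) as [y [Hy [lam [Hl Hb]]]].
    destruct (HL y Hy) as [_ Hc].
    assert (Hle: (cover_count (fun i => nz (nth i L d)) N w v <= length (filter (fun a => Ib (dot3 y (nz a)) H) L))%nat).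
    { unfold cover_count. rewrite <- (filter_nth (fun a => Ib (dot3 y (nz a)) H) d L), Hlen.
      apply filter_len_mono. intros i Hi Hp. apply in_seq in Hi.
      assert (Hs: on_sphere (nz (nth i L d))) by (apply Hsph, nth_In; lia).
      specialize (Hb _ Hs). fold n in Hb.
      destruct (Rle_dec (Rabs (dot3 v (nz (nth i L d)))) w) as [r|]; [|discriminate].
      unfold Ib. destruct Rle_dec as [|nr]; auto. exfalso; apply nr.
      set (x := nz (nth i L d)) in *.
      pose proof (Rabs_triang (lam * dot3 y x - dot3 v x) (dot3 v x)).
      replace (lam * dot3 y x - dot3 v x + dot3 v x) with (lam * dot3 y x) in H0 by ring.
      rewrite Rabs_minus_sym in H0. rewrite Rabs_mult, Rabs_right in H0 by lra.
      unfold H, w in *. fold n in r.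
      pose proof (Rabs_pos (dot3 y x)). nra. }
    apply le_INR in Hle. apply le_INR in Hc. rewrite S_INR in Hc. lra.
Qed.
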